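(* For every term $t\in T^{*,\circ}$, one has $t =_{ALD} I(t)[J(t)]$.
   Context: For $n\ge1$, $T_n^*$ (resp. $T_n^\circ$, $T_n^{*,\circ}$) is the set of terms built from variables $x_1,\dots,x_n$ using the binary operator $*$ (resp. $\circ$, resp. both); $T^*=\bigcup_nT_n^*$, $T^{*,\circ}=\bigcup_nT_n^{*,\circ}$, $x$ denotes $x_1$, and $T_1^\circ$ is the set of $\circ$-terms in $x$. The size of a term is its number of occurrences of variables. $=_{ALD}$ is the congruence on $T^{*,\circ}$ generated by all instances of $x*(y*z)=(x*y)*(x*z)$, $x*(y*z)=(x\circ y)*z$ and $x*(y\circ z)=(x*y)\circ(x*z)$. For a set $S$ with binary operation $*$, $\widehat S$ denotes the finite nonempty sequences over $S$, $\frown$ concatenation, and $\vec s\mathbin{\vec{*}}\vec t=(s_1*\cdots*s_p*t_1,\dots,s_1*\cdots*s_p*t_q)$ ($p,q$ the lengths; parentheses added on the right). For $t\in T^{*,\circ}$, $I(t)\in T_1^\circ$ and $J(t)\in\widehat{T^*}$ are defined inductively: if $t$ is a variable, $(I(t),J(t))=(x,(t))$; if $t=t_1*t_2$, $(I(t),J(t))=(I(t_2),J(t_1)\mathbin{\vec{*}}J(t_2))$; if $t=t_1\circ t_2$, $(I(t),J(t))=(I(t_1)\circ I(t_2),J(t_1)\frown J(t_2))$ (the size of $I(t)$ equals the length of $J(t)$). For $v\in T_1^\circ$ of size $p$ and a length-$p$ sequence $\vec t=(t_1,\dots,t_p)$ of terms of $T^*$, $v[\vec t]$ denotes the term obtained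 from $v$ by substituting $t_1,\dots,t_p$ for the occurrences of the variable in $v$, enumerated from left to right. *)

(* Defs.v *)
From Stdlib Require Import List.
Import ListNotations.

(* Terms built from variables x_1, x_2, ... with two binary operators * and o.
   [Var i] denotes the variable x_(i+1); so [Var 0] is x = x_1. *)
Inductive term : Type :=
| Var : nat -> term
| Star : term -> term -> term
| Circ : term -> term -> term.

Definition x : term := Var 0.

Inductive ald_eq : term -> term -> Prop :=
| ald_LD  : forall a b c, ald_eq (Star a (Star b c)) (Star (Star a b) (Star a c))
| ald_A   : forall a b c, ald_eq (Star a (Star b c)) (Star (Circ a b) c)
| ald_D   : forall a b c, ald_eq (Star a (Circ b c)) (Circ (Star a b) (Star a c))
| ald_refl : forall a, ald_eq a a
| ald_sym : forall a b, ald_eq a b -> ald_eq b a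
| ald_trans : forall a b c, ald_eq a b -> ald_eq b c -> ald_eq a c
| ald_Star : forall a a' b b', ald_eq a a' -> ald_eq b b' -> ald_eq (Star a b) (Star a' b')
| ald_Circ : forall a a' b b', ald_eq a a' -> ald_eq b b' -> ald_eq (Circ a b) (Circ a' b').

Fixpoint star_prefix (s : list term) (u : term) : term :=
  match s with
  | [] => u
  | a :: s' => Star a (star_prefix s' u)
  end.

Definition vec_star (s t : list term) : list term :=
  map (star_prefix s) t.

Fixpoint I (t : term) : term :=
  match t with
  | Var _ => x
  | Star _ t2 => I t2
  | Circ t1 t2 => Circ (I t1) (I t2)
  end.

Fixpoint J (t : term) : list term :=
  match t with
  | Var _ => [t]
  | Star t1 t2 => vec_star (J t1) (J t2)
  | Circ t1 t2 => J t1 ++ J t2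
  end.

(* Substitution of a sequence into the variable occurrences of v, enumerated
   left to right: returns the resulting term and the unused suffix of the
   sequence.  Only meaningful when size v = length of the sequence (missing
   entries, which never occur in that case, default to the variable itself). *)
Fixpoint subst_aux (v : term) (ts : list term) : term * list term :=
  match v with
  | Var i => match ts with
             | [] => (Var i, [])
             | u :: ts' => (u, ts')
             end
  | Star a b => let (a', r1) := subst_aux a ts in
                let (b', r2) := subst_aux b r1 in (Star a' b', r2)
  | Circ a b => let (a', r1) := subst_aux a ts in
                let (b', r2) := subst_aux b r1 in (Circ a' b', r2)
  end.

Definition subst (v : term) (ts : list term) : term := fst (subst_aux v ts).

(* Main.v *)
Require Import Defs.
From Stdlib Require Import List Lia.
Import ListNotations.

Fixpoint tsize (v : term) : nat :=
  match v with
  | Var _ => 1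
  | Star a b => tsize a + tsize b
  | Circ a b => tsize a + tsize b
  end.

Fixpoint circ (v : term) : Prop :=
  match v with
  | Var _ => True
  | Star _ _ => False
  | Circ a b => circ a /\ circ b
  end.

Lemma sa_ex : forall v ts, length ts = tsize v ->
  exists w, forall r, subst_aux v (ts ++ r) = (w, r).
Proof.
  induction v as [n|v1 IH1 v2 IH2|v1 IH1 v2 IH2]; intros ts H; simpl in H.
  - destruct ts as [|a [|b ts]]; simpl in H; try lia.
    exists a; intros r; reflexivity.
  - rewrite <- (firstn_skipn (tsize v1) ts).
    destruct (IH1 (firstn (tsize v1) ts)) as [w1 H1].
    { rewrite length_firstn; lia. }
    destruct (IH2 (skipn (tsize v1) ts)) as [w2 H2].
    { rewrite length_skipn; lia. }
    exists (Star w1 w2); intros r. simpl. rewrite <- app_assoc, H1, H2. reflexivity.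
  - rewrite <- (firstn_skipn (tsize v1) ts).
    destruct (IH1 (firstn (tsize v1) ts)) as [w1 H1].
    { rewrite length_firstn; lia. }
    destruct (IH2 (skipn (tsize v1) ts)) as [w2 H2].
    { rewrite length_skipn; lia. }
    exists (Circ w1 w2); intros r. simpl. rewrite <- app_assoc, H1, H2. reflexivity.
Qed.

Lemma sa_eq : forall v ts r, length ts = tsize v ->
  subst_aux v (ts ++ r) = (subst v ts, r).
Proof.
  intros v ts r H. destruct (sa_ex v ts H) as [w Hw].
  unfold subst. rewrite <- (app_nil_r ts) at 2. rewrite !Hw. reflexivity.
Qed.

Lemma circ_split : forall v1 v2 ts1 ts2, length ts1 = tsize v1 -> length ts2 = tsize v2 ->
  subst (Circ v1 v2) (ts1 ++ ts2) = Circ (subst v1 ts1) (subst v2 ts2).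
Proof.
  intros. unfold subst at 1. simpl. rewrite sa_eq by auto.
  rewrite <- (app_nil_r ts2). rewrite sa_eq by auto. rewrite app_nil_r. reflexivity.
Qed.

Lemma star_prefix_app : forall s1 s2 u,
  star_prefix (s1 ++ s2) u = star_prefix s1 (star_prefix s2 u).
Proof. induction s1; simpl; intros; [reflexivity| rewrite IHs1; reflexivity]. Qed.

Lemma len_J : forall t, length (J t) = tsize (I t).
Proof.
  induction t; simpl; auto.
  - unfold vec_star. rewrite length_map. auto.
  - rewrite length_app. lia.
Qed.

Lemma circ_I : forall t, circ (I t).
Proof. induction t; simpl; auto. Qed.

Lemma L1 : forall v ts u, circ v -> length ts = tsize v ->
  ald_eq (Star (subst v ts) u) (star_prefix ts u).
Proof.
  induction v as [n|v1 IH1 v2 IH2|v1 IH1 v2 IH2]; intros ts u Hc H; simpl in *.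
  - destruct ts as [|a [|b ts]]; simpl in H; try lia. apply ald_refl.
  - contradiction.
  - destruct Hc as [c1 c2].
    rewrite <- (firstn_skipn (tsize v1) ts).
    assert (E1 : length (firstn (tsize v1) ts) = tsize v1) by (rewrite length_firstn; lia).
    assert (E2 : length (skipn (tsize v1) ts) = tsize v2) by (rewrite length_skipn; lia).
    rewrite circ_split by auto. rewrite star_prefix_app.
    eapply ald_trans. apply ald_sym, ald_A.
    eapply ald_trans. apply ald_Star. apply ald_refl. apply IH2; auto.
    apply IH1; auto.
Qed.

Lemma L2 : forall v ts a f, circ v -> length ts = tsize v ->
  (forall u, ald_eq (Star a u) (f u)) ->
  ald_eq (Star a (subst v ts)) (subst v (map f ts)).
Proof.
  induction v as [n|v1 IH1 v2 IH2|v1 IH1 v2 IH2]; intros ts a f Hc H Hf; simpl in *.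
  - destruct ts as [|b [|c ts]]; simpl in H; try lia. apply Hf.
  - contradiction.
  - destruct Hc as [c1 c2].
    rewrite <- (firstn_skipn (tsize v1) ts).
    assert (E1 : length (firstn (tsize v1) ts) = tsize v1) by (rewrite length_firstn; lia).
    assert (E2 : length (skipn (tsize v1) ts) = tsize v2) by (rewrite length_skipn; lia).
    rewrite map_app.
    rewrite circ_split by auto. rewrite circ_split by (rewrite length_map; auto).
    eapply ald_trans. apply ald_D.
    apply ald_Circ; auto.
Qed.

Theorem lemma1p12 : forall t : term, ald_eq t (subst (I t) (J t)).
Proof.
  induction t as [n|t1 IH1 t2 IH2|t1 IH1 t2 IH2].
  - apply ald_refl.
  - simpl. unfold vec_star.
    eapply ald_trans. apply ald_Star. apply ald_refl. apply IH2.
    apply L2. apply circ_I. apply len_J.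
    intros u. eapply ald_trans. apply ald_Star. apply IH1. apply ald_refl.
    apply L1. apply circ_I. apply len_J.
  - simpl. rewrite circ_split by apply len_J. apply ald_Circ; auto.
Qed.
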